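(* For all integers $q \ge d \ge 2$, $B(q,d,2) = \left\lceil \frac{q-1}{d-1}\right\rceil$; that is, for every $f:\binom{[q]}{d}\to\{0,1\}$ there are $b=\lceil \frac{q-1}{d-1}\rceil$ sets $S_1,\dots,S_b\in\binom{[q]}{d}$ with $S_1\cup\dots\cup S_b=[q]$ on which $f$ is constant, and this number cannot be decreased in general.
   Context: $\binom{[q]}{d}$ denotes the family of $d$-element subsets of $[q]=\{1,\dots,q\}$. A function $f:\binom{[q]}{d}\to[c]$ has a $t$-cover if there exist $S_1,\dots,S_t\in\binom{[q]}{d}$ (not necessarily distinct) with $S_1\cup\dots\cup S_t=[q]$ and $f(S_1)=\dots=f(S_t)$. $B(q,d,c)$ is the minimum $t$ such that every $f:\binom{[q]}{d}\to[c]$ has a $t$-cover. *)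

(* Defs.v *)
From mathcomp Require Import all_boot.
Set Implicit Arguments. Unset Strict Implicit. Unset Printing Implicit Defensive.

(* A colouring f of the d-subsets of [q] = 'I_q with c colours ('I_c).
   f is given on all subsets of 'I_q; only its values on d-subsets matter. *)
Definition has_cover (q d c t : nat) (f : {set 'I_q} -> 'I_c) : Prop :=
  exists S : 'I_t -> {set 'I_q},
    [/\ forall i, #|S i| = d,
        \bigcup_(i < t) S i = [set: 'I_q]
      & forall i j, f (S i) = f (S j)].

Definition is_B (q d c t : nat) : Prop :=
  (forall f : {set 'I_q} -> 'I_c, has_cover d t f) /\
  (forall t', (forall f : {set 'I_q} -> 'I_c, has_cover d t' f) -> t <= t').

Definition ceil_div (m n : nat) : nat := (m + n.-1) %/ n.

(* Main.v *)
Require Import Defs.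
From mathcomp Require Import all_boot.
From mathcomp Require Import zify.

Lemma ext_subset (T : finType) (A B : {set T}) n : A \subset B -> #|A| <= n <= #|B| ->
  exists C : {set T}, [/\ A \subset C, C \subset B & #|C| = n].
Proof.
elim: n => [|n IH] sAB /andP[hA hB].
  have A0 : A = set0 by apply/eqP; rewrite -cards_eq0 -leqn0.
  by exists set0; rewrite A0 cards0 !sub0set.
case: (ltnP n #|A|) => h.
  by exists A; split => //; lia.
have [C [sAC sCB cC]] : exists C : {set T}, [/\ A \subset C, C \subset B & #|C| = n].
  by apply: IH => //; apply/andP; split; lia.
have : B :\: C != set0.
  by rewrite -card_gt0 cardsD (setIidPr sCB); lia.
case/set0Pn => x /setDP [xB xC].
exists (x |: C); split.
- exact: subset_trans sAC (subsetUr _ _).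
- by rewrite subUset sub1set xB sCB.
- by rewrite cardsU1 xC cC.
Qed.

Lemma two_col (a b c : 'I_2) : a != c -> a != b -> b = c.
Proof.
by case: a b c => [[|[|a]] Ha] [[|[|b]] Hb] [[|[|c]] Hc] //= _ _; apply/val_inj.
Qed.

Lemma walk q d (f : {set 'I_q} -> 'I_2) (U : {set 'I_q}) n : forall S T : {set 'I_q},
  S \subset U -> T \subset U -> #|S| = d -> #|T| = d -> #|S :\: T| = n -> f S != f T ->
  exists (I : {set 'I_q}) (x y : 'I_q), [/\ I \subset U, #|I| = d.-1, x \in U :\: I, y \in U :\: I
                  & f (x |: I) != f (y |: I)].
Proof.
elim: n => [|n IH] S T sSU sTU cS cT cST fST.
  have sST : S \subset T by rewrite -setD_eq0 -cards_eq0 cST.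
  have eST : S == T by rewrite eqEcard sST cS cT leqnn.
  by rewrite (eqP eST) eqxx in fST.
have : S :\: T != set0 by rewrite -card_gt0 cST.
case/set0Pn => x /setDP [xS xT].
have d1 : 0 < d by rewrite -cS card_gt0; apply/set0Pn; exists x.
have : T :\: S != set0.
  by rewrite -card_gt0 cardsD setIC cT -cS -cardsD cST.
case/set0Pn => y /setDP [yT yS].
have yU : y \in U by apply: (subsetP sTU).
have xU : x \in U by apply: (subsetP sSU).
have cI : #|S :\ x| = d.-1 by move: (cardsD1 x S); rewrite xS cS; lia.
have yI : y \notin S :\ x by rewrite !inE (negbTE yS) andbF.
have xI : x \notin S :\ x by rewrite !inE eqxx.
case: (eqVneq (f S) (f (y |: (S :\ x)))) => h.
  apply: (IH (y |: (S :\ x)) T) => //.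
  - by rewrite subUset sub1set yU (subset_trans (subsetDl _ _) sSU).
  - by rewrite cardsU1 yI cI /=; lia.
  - have -> : (y |: (S :\ x)) :\: T = (S :\: T) :\ x.
      apply/setP => z; rewrite !inE.
      case: (eqVneq z y) => [->|nzy]; first by rewrite yT /= andbF.
      by rewrite /=; case: (z \in T); case: (z == x); case: (z \in S).
    by move: (cardsD1 x (S :\: T)); rewrite !inE xS xT cST; lia.
  - by rewrite -h.
exists (S :\ x), x, y; split => //.
- exact: subset_trans (subsetDl _ _) sSU.
- by rewrite inE xI xU.
- by rewrite inE yI yU.
- by rewrite setD1K.
Qed.

Lemma gen q d (f : {set 'I_q} -> 'I_2) : 2 <= d -> forall k, 0 < k ->
  forall U : {set 'I_q}, d <= #|U| -> #|U| <= 1 + k * (d - 1) ->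
  exists c, exists s : seq {set 'I_q}, [/\ size s = k,
     (forall S, S \in s -> [/\ #|S| = d, S \subset U & f S = c])
   & U \subset \bigcup_(S <- s) S].
Proof.
move=> hd; elim=> [//|k IH] _ U hU1 hU2.
case: (posnP k) => [k0|kpos].
  subst k; exists (f U), [:: U]; split => //.
    by move=> S; rewrite inE => /eqP ->; split => //; lia.
  by rewrite big_seq1.
case: (leqP #|U| (1 + k * (d - 1))) => hU3.
  have [c [s [ss Hs cov]]] := IH kpos U hU1 hU3.
  case: s ss Hs cov => [/= ss|S0 s ss Hs cov]; first by move: kpos; rewrite -ss.
  exists c, [:: S0, S0 & s]; split.
  - by move: ss => /= <-.
  - move=> S; rewrite inE => /orP [/eqP ->|HS]; last exact: Hs.
    by apply: Hs; rewrite mem_head.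
  - by move: cov; rewrite !big_cons setUA setUid.
have hm : d - 1 <= k * (d - 1) by rewrite leq_pmull.
rewrite mulSn in hU2.
set r := minn (d - 1) (#|U| - d).
have key : exists R : {set 'I_q}, [/\ R \subset U, #|R| = r & forall (c : 'I_2) (S0 : {set 'I_q}), S0 \subset U -> #|S0| = d ->
     f S0 = c -> exists X : {set 'I_q}, [/\ R \subset X, X \subset U, #|X| = d & f X = c]].
  case: (boolP [exists S : {set 'I_q}, [exists T : {set 'I_q},
        [&& S \subset U, T \subset U, #|S| == d, #|T| == d & f S != f T]]]).
    move=> /existsP [S /existsP [T /and5P [sSU sTU /eqP cS /eqP cT fST]]].
    have [I [x [y [sIU cI xI yI fxy]]]] :=
      @walk q d f U _ S T sSU sTU cS cT (erefl _) fST.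
    have [R [_ sRI cR]] : exists C : {set 'I_q}, [/\ set0 \subset C, C \subset I & #|C| = r].
      by apply: ext_subset; rewrite ?sub0set // cards0 cI /r; lia.
    exists R; split => //; first exact: subset_trans sRI sIU.
    move=> c S0 _ _ _.
    move: xI yI => /setDP [xU xI] /setDP [yU yI].
    case: (eqVneq (f (x |: I)) c) => hx.
      exists (x |: I); split => //.
      - exact: subset_trans sRI (subsetUr _ _).
      - by rewrite subUset sub1set xU sIU.
      - by rewrite cardsU1 xI cI; lia.
    exists (y |: I); split.
    - exact: subset_trans sRI (subsetUr _ _).
    - by rewrite subUset sub1set yU sIU.
    - by rewrite cardsU1 yI cI /=; lia.
    - exact: two_col hx fxy.
  move=> /existsPn H.
  have [R [_ sRU cR]] : exists C : {set 'I_q}, [/\ set0 \subset C, C \subset U & #|C| = r].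
    by apply: ext_subset; rewrite ?sub0set // cards0 /r; lia.
  exists R; split => // c S0 sS0U cS0 fS0.
  have [X [sRX sXU cX]] : exists C : {set 'I_q}, [/\ R \subset C, C \subset U & #|C| = d].
    by apply: ext_subset => //; rewrite cR /r; lia.
  exists X; split => //.
  move: (H X) => /existsPn /(_ S0).
  by rewrite sXU sS0U cX cS0 eqxx /= negbK => /eqP ->.
have [R [sRU cR HR]] := key.
have cU' : #|U :\: R| = #|U| - r by rewrite cardsD (setIidPr sRU) cR.
have [c [s [ss Hs cov]]] : exists c, exists s : seq {set 'I_q}, [/\ size s = k,
     (forall S, S \in s -> [/\ #|S| = d, S \subset U :\: R & f S = c])
   & U :\: R \subset \bigcup_(S <- s) S].
  apply: IH => //; rewrite cU' /r; lia.
case: s ss Hs cov => [/= ss|S0 s ss Hs cov]; first by move: kpos; rewrite -ss.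
have [cS0 sS0 fS0] := Hs S0 (mem_head _ _).
have [X [sRX sXU cX fX]] := HR c S0 (subset_trans sS0 (subsetDl _ _)) cS0 fS0.
exists c, [:: X, S0 & s]; split.
- by move: ss => /= <-.
- move=> S; rewrite inE => /orP [/eqP ->|HS]; first by [].
  by have [h1 h2 h3] := Hs S HS; split => //; apply: subset_trans h2 (subsetDl _ _).
- apply/subsetP => z zU; rewrite big_cons in_setU.
  case: (boolP (z \in R)) => zR; first by rewrite (subsetP sRX).
  by rewrite (subsetP cov) ?orbT // inE zR zU.
Qed.

Lemma card_bigcup_le q t (A : 'I_t -> {set 'I_q}) :
  #|\bigcup_(i < t) A i| <= \sum_(i < t) #|A i|.
Proof.
apply: (big_ind2 (fun (X : {set 'I_q}) n => #|X| <= n)) => //.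
- by rewrite cards0.
- move=> X1 n1 X2 n2 h1 h2; rewrite cardsU; lia.
Qed.

Theorem lemmaA1 (q d : nat) : 2 <= d -> d <= q ->
  is_B q d 2 (ceil_div (q - 1) (d - 1)).
Proof.
move=> hd hdq.
have dpos : 0 < d - 1 by lia.
set M := q - 1 + (d - 1).-1.
have eM := divn_eq M (d - 1).
have lM := ltn_pmod M dpos.
have bpos : 0 < ceil_div (q - 1) (d - 1) by rewrite /ceil_div divn_gt0 // /M; lia.
have hb : q <= 1 + ceil_div (q - 1) (d - 1) * (d - 1).
  rewrite /ceil_div -/M; move: eM lM; move: (M %/ (d - 1) * (d - 1)) (M %% (d - 1)) => x y.
  rewrite /M; lia.
split.
  move=> f.
  have cT : #|[set: 'I_q]| = q by rewrite cardsT card_ord.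
  have h1 : d <= #|[set: 'I_q]| by rewrite cT.
  have h2 : #|[set: 'I_q]| <= 1 + ceil_div (q - 1) (d - 1) * (d - 1) by rewrite cT.
  have [c [s [ss Hs cov]]] := @gen q d f hd _ bpos [set: 'I_q] h1 h2.
  exists (fun i : 'I_(ceil_div (q - 1) (d - 1)) => nth set0 s i).
  have mi : forall i : 'I_(ceil_div (q - 1) (d - 1)), nth set0 s i \in s.
    by move=> i; apply: mem_nth; rewrite ss ltn_ord.
  split.
  - by move=> i; have [] := Hs _ (mi i).
  - apply/eqP; rewrite eqEsubset subsetT /=.
    by move: cov; rewrite (big_nth set0) ss big_mkord.
  - by move=> i j; have [_ _ ->] := Hs _ (mi i); have [_ _ ->] := Hs _ (mi j).
move=> t H.
have q0 : 0 < q by lia.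
pose x0 : 'I_q := Ordinal q0.
pose f0 := fun S : {set 'I_q} => if x0 \in S then (@ord_max 1) else (ord0 : 'I_2).
have [S [cS cov fS]] := H f0.
have : x0 \in \bigcup_(i < t) S i by rewrite cov inE.
case/bigcupP => i0 _ xi0.
have allx : forall i, x0 \in S i.
  move=> i; move: (fS i i0); rewrite /f0 xi0.
  by case: (x0 \in S i).
have hq : q <= 1 + t * (d - 1).
  have -> : q = #|[set: 'I_q]| by rewrite cardsT card_ord.
  have sub : [set: 'I_q] \subset x0 |: \bigcup_(i < t) (S i :\ x0).
    apply/subsetP => z _.
    have : z \in \bigcup_(i < t) S i by rewrite cov inE.
    case/bigcupP => i _ zi.
    rewrite !inE; case: (eqVneq z x0) => //= nz.
    by apply/bigcupP; exists i => //; rewrite !inE nz zi.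
  apply: leq_trans (subset_leq_card sub) _.
  rewrite cardsU1.
  have h1 := @card_bigcup_le q t (fun i => S i :\ x0).
  have h2 : \sum_(i < t) #|S i :\ x0| = t * (d - 1).
    rewrite (eq_bigr (fun _ => d - 1)); first by rewrite sum_nat_const card_ord.
    by move=> i _; move: (cardsD1 x0 (S i)); rewrite allx cS /= => ->; rewrite addKn.
  by apply: leq_add; [exact: leq_b1 | rewrite -h2].
rewrite /ceil_div -/M.
rewrite -ltnS ltn_divLR //.
move: eM lM hq; move: (M %/ (d - 1) * (d - 1)) (M %% (d - 1)) => x y.
rewrite /M mulSn; lia.
Qed.
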